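(* Let $\mathcal{X},\mathcal{Y}$ be Hilbert spaces, $F:\mathcal{D}(F)\subset\mathcal{X}\to\mathcal{Y}$ a (nonlinear) operator, $y\in\mathcal{Y}$ exact data and $y^\delta\in\mathcal{Y}$ noisy data with $\|y-y^\delta\|\le\delta$. Assume: (a) $\Theta:\mathcal{X}\to(-\infty,\infty]$ is proper, weakly lower semi-continuous and $p$-convex for some $p>1$, i.e. there is $c_0>0$ with $D_\xi\Theta(\bar x,x)\ge c_0\|x-\bar x\|^p$ for all $\bar x\in\mathcal{D}(\Theta)$, $x\in\mathcal{D}(\partial\Theta)$, $\xi\in\partial\Theta(x)$; (b) there are $\rho>0$, $x_0\in\mathcal{X}$ and $\xi_0\in\partial\Theta(x_0)$ with $B_{2\rho}(x_0)\subset\mathcal{D}(F)$, and $F(x)=y$ has a solution $x^*\in\mathcal{D}(\Theta)$ with $D_{\xi_0}\Theta(x^*,x_0)\le c_0\rho^p$; (c) $F$ is continuous and weakly closed on $\mathcal{D}(F)$; (d) there is a family of bounded linear operators $\{L(x):\mathcal{X}\to\mathcal{Y}\}_{x\in B_{2\rho}(x_0)\cap\mathcal{D}(\Theta)}$ such that $x\mapsto L(x)$ is continuous on $B_{2\rho}(x_0)\cap\mathcal{D}(\Theta)$, there is $0\le\eta<1$ with $\|F(x)-F(\bar x)-L(\bar x)(x-\bar x)\|<\eta\|F(x)-F(\bar x)\|$ for all $x,\bar x\in B_{2\rho}(x_0)\cap\mathcal{D}(\Theta)$, and there is $C_0>0$ with $\|L(x)\|\le C_0$ for all $x\in B_{2\rho}(x_0)$.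 Let $(\xi^\delta(t),x^\delta(t))$ be the solution of the initial value problem $$\frac{d\xi^\delta(t)}{dt}=-L(x^\delta(t))^*(F(x^\delta(t))-y^\delta),\quad x^\delta(t)=\nabla\Theta^*(\xi^\delta(t)),\qquad \xi^\delta(0)=\xi_0,\ x^\delta(0)=x_0,$$ for $T>0$. Then $x^\delta(T)$ and the residual $\|F(x^\delta(T))-y^\delta\|$ are continuous with respect to $T$.
   Context: For a convex $\Theta$, $\partial\Theta(x)=\{\xi:\Theta(\bar x)-\Theta(x)-\langle\xi,\bar x-x\rangle\ge0\ \forall\bar x\}$, $\mathcal{D}(\Theta)=\{x:\Theta(x)<\infty\}$, $\mathcal{D}(\partial\Theta)=\{x\in\mathcal{D}(\Theta):\partial\Theta(x)\neq\emptyset\}$, and the Bregman distance is $D_\xi\Theta(\bar x,x)=\Theta(\bar x)-\Theta(x)-\langle\xi,\bar x-x\rangle$ for $\xi\in\partial\Theta(x)$. $\Theta^*(\xi)=\sup_x\{\langle\xi,x\rangle-\Theta(x)\}$ is the Legendre–Fenchel conjugate, $\nabla\Theta^*$ its gradient, $L(x)^*$ the adjoint of $L(x)$, and $B_{2\rho}(x_0)$ the closed ball of radius $2\rho$ about $x_0$. *)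

(* Defs.v *)
From HB Require Import structures.
From mathcomp Require Import all_boot all_order all_algebra.
From mathcomp Require Import all_classical all_reals all_analysis.
Set Implicit Arguments. Unset Strict Implicit. Unset Printing Implicit Defensive.
Import Order.TTheory GRing.Theory Num.Theory.
Import numFieldNormedType.Exports.
Local Open Scope classical_set_scope.
Local Open Scope ring_scope.

Section Defs.
Context {R : realType}.

(** [ip] is an inner product on the real normed space [X] inducing its norm.
    A real Hilbert space is then a [completeNormedModType R] with such an [ip]. *)
Definition is_inner_product (X : normedModType R) (ip : X -> X -> R) : Prop :=
  [/\ (forall x y, ip x y = ip y x),
      (forall (a : R) x y z, ip (a *: x + y) z = a * ip x z + ip y z) &
      (forall x, ip x x = `|x| ^+ 2)].

Definition cball (X : normedModType R) (x : X) (r : R) : set X :=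
  [set z | `|z - x| <= r].

Definition weak_cvg (X : normedModType R) (ip : X -> X -> R)
    (u : nat -> X) (x : X) : Prop :=
  forall z, (fun n => ip (u n) z) @ \oo --> ip x z.

Definition edom (X : normedModType R) (Th : X -> \bar R) : set X :=
  [set x | (Th x < +oo)%E].

Definition subdiff (X : normedModType R) (ip : X -> X -> R)
    (Th : X -> \bar R) (x xi : X) : Prop :=
  (Th x < +oo)%E /\
  forall xb, (Th x + (ip xi (xb - x))%:E <= Th xb)%E.

Definition subdiff_dom (X : normedModType R) (ip : X -> X -> R)
    (Th : X -> \bar R) : set X :=
  [set x | x \in edom Th /\ exists xi, subdiff ip Th x xi].

Definition bregman (X : normedModType R) (ip : X -> X -> R)
    (Th : X -> \bar R) (xi xb x : X) : \bar R :=
  (Th xb - Th x - (ip xi (xb - x))%:E)%E.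

Definition conjugate (X : normedModType R) (ip : X -> X -> R)
    (Th : X -> \bar R) (xi : X) : \bar R :=
  ereal_sup [set ((ip xi x)%:E - Th x)%E | x in setT].

Definition is_gradient (X : normedModType R) (ip : X -> X -> R)
    (f : X -> \bar R) (xi g : X) : Prop :=
  f xi \is a fin_num /\
  forall eps : R, 0 < eps -> exists2 del : R, 0 < del &
    forall h : X, `|h| < del ->
      exists r : R, f (xi + h) = r%:E /\
        `|r - fine (f xi) - ip g h| <= eps * `|h|.

Definition weakly_lsc (X : normedModType R) (ip : X -> X -> R)
    (Th : X -> \bar R) : Prop :=
  forall (u : nat -> X) x, weak_cvg ip u x ->
    (Th x <= limn_einf (fun n => Th (u n)))%E.

Definition weakly_closed (X Y : normedModType R) (ipX : X -> X -> R)
    (ipY : Y -> Y -> R) (F : X -> Y) (D : set X) : Prop :=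
  forall (u : nat -> X) x y, (forall n, D (u n)) ->
    weak_cvg ipX u x -> weak_cvg ipY (fun n => F (u n)) y ->
    D x /\ F x = y.

Definition linear_op (X Y : normedModType R) (A : X -> Y) : Prop :=
  forall (a : R) u v, A (a *: u + v) = a *: A u + A v.

End Defs.

(* Main.v *)
Require Import Defs.
From HB Require Import structures.
From mathcomp Require Import all_boot all_order all_algebra.
From mathcomp Require Import all_classical all_reals all_analysis.
From mathcomp Require Import ring lra.
Import Order.TTheory GRing.Theory Num.Theory.
Import numFieldNormedType.Exports.
Local Open Scope classical_set_scope.
Local Open Scope ring_scope.

Section IP.
Context {R : realType} {X : normedModType R} (ip : X -> X -> R).
Hypothesis hip : is_inner_product ip.

Lemma ipC u v : ip u v = ip v u.
Proof. by case: hip. Qed.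
Lemma ipZD a u v z : ip (a *: u + v) z = a * ip u z + ip v z.
Proof. by case: hip. Qed.
Lemma ipxx u : ip u u = `|u| ^+ 2.
Proof. by case: hip. Qed.
Lemma ip0l z : ip 0 z = 0.
Proof.
have := ipZD 1 0 0 z; rewrite scale1r addr0 mul1r => h.
by apply: (addrI (ip 0 z)); rewrite addr0 -h.
Qed.
Lemma ipDl u v z : ip (u + v) z = ip u z + ip v z.
Proof. by rewrite -[in LHS](scale1r u) ipZD mul1r. Qed.
Lemma ipZl a u z : ip (a *: u) z = a * ip u z.
Proof. by rewrite -[a *: u]addr0 ipZD ip0l addr0. Qed.
Lemma ipNl u z : ip (- u) z = - ip u z.
Proof. by rewrite -scaleN1r ipZl mulN1r. Qed.
Lemma ipBl u v z : ip (u - v) z = ip u z - ip v z.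
Proof. by rewrite ipDl ipNl. Qed.
Lemma ipDr u v z : ip z (u + v) = ip z u + ip z v.
Proof. by rewrite ipC ipDl !(ipC z). Qed.
Lemma ipZr a u z : ip z (a *: u) = a * ip z u.
Proof. by rewrite ipC ipZl (ipC z). Qed.
Lemma ipBr u v z : ip z (u - v) = ip z u - ip z v.
Proof. by rewrite ipC ipBl !(ipC z). Qed.
End IP.

Section Conj.
Context {R : realType} {X : normedModType R} (ip : X -> X -> R)
  (Th : X -> \bar R).
Hypothesis hip : is_inner_product ip.
Hypothesis Thn : forall z, Th z != -oo%E.

Lemma conj_ub a z : ((ip a z)%:E - Th z <= conjugate ip Th a)%E.
Proof. by apply: ereal_sup_ubound; exists z. Qed.

Lemma conj_convex a e (A r t : R) : 0 <= t <= 1 ->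
  conjugate ip Th a = A%:E -> conjugate ip Th e = r%:E ->
  (conjugate ip Th (a + t *: (e - a))%R <= ((1 - t) * A + t * r)%:E)%E.
Proof.
move=> /andP[t0 t1] hA hr; apply: ge_ereal_sup => _ [z _ <-].
have ha := conj_ub a z; have he := conj_ub e z.
rewrite hA in ha; rewrite hr in he.
move: (Thn z) ha he; case: (Th z) => [c| |] // _.
- move=> ha he; move: ha he; rewrite -!EFinB !lee_fin => ha he.
  rewrite (ipDl _ hip) (ipZl _ hip) (ipBl _ hip).
  have h1 : 0 <= 1 - t by rewrite subr_ge0.
  nra.
- by move=> _ _; rewrite addeNy leNye.
Qed.
End Conj.

Section Grad.
Context {R : realType} {X : normedModType R} (ip : X -> X -> R)
  (Th : X -> \bar R).
Hypothesis hip : is_inner_product ip.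
Hypothesis Thn : forall z, Th z != -oo%E.
Local Notation f := (conjugate ip Th).

Lemma grad_sub a g e r : is_gradient ip f a g -> f e = r%:E ->
  fine (f a) + ip g (e - a) <= r.
Proof.
move=> [fa_fin hg] her.
set A := fine (f a); have hA : f a = A%:E by rewrite fineK.
set v := e - a; set N := `|v|.
have N0 : 0 <= N by rewrite /N normr_ge0.
have key : forall eps, 0 < eps -> ip g v <= r - A + eps * N.
  move=> eps eps0; have [del del0 hdel] := hg eps eps0.
  set D := 2 * (N + 1) + del.
  have D0 : 0 < D by rewrite /D; lra.
  set t := del / D.
  have tD : t * D = del by rewrite /t mulfVK // gt_eqF.
  have t0 : 0 < t by rewrite /t divr_gt0.
  have t1 : t <= 1 by rewrite /t ler_pdivrMr // mul1r /D; lra.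
  have htN : `|t *: v| < del.
    rewrite normrZ gtr0_norm // -/N.
    have : t * N < t * D by rewrite ltr_pM2l // /D; lra.
    by rewrite tD.
  have [q [hq hqb]] := hdel _ htN.
  have hc := @conj_convex _ _ ip Th hip Thn a e A r t ltac:(apply/andP; split; lra) hA her.
  rewrite -/v hq lee_fin in hc.
  rewrite normrZ gtr0_norm // -/N (ipZr _ hip) in hqb.
  move: hqb; rewrite -/A ler_norml => /andP[hl1 hl2].
  have : t * ip g v <= t * (r - A + eps * N) by nra.
  by rewrite ler_pM2l.
have : ip g v <= r - A.
  apply/ler_addgt0Pr => eps eps0.
  have N1 : 0 < N + 1 by lra.
  have := key (eps / (N + 1)) (divr_gt0 eps0 N1).
  move=> h; apply: (le_trans h); rewrite lerD2l.
  rewrite mulrAC ler_pdivrMr //; nra.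
lra.
Qed.
End Grad.

Section Smul.
Context {R : realType} {X : normedModType R} (ip : X -> X -> R)
  (Th : X -> \bar R).
Hypothesis hip : is_inner_product ip.
Hypothesis Thn : forall z, Th z != -oo%E.
Local Notation f := (conjugate ip Th).

Lemma grad_cont a g : is_gradient ip f a g -> forall eps, 0 < eps ->
  exists2 d, 0 < d & forall b gb, `|b - a| < d -> is_gradient ip f b gb ->
    `|gb - g| <= eps.
Proof.
move=> ga eps eps0; have ga' := ga; case: ga' => [fa_fin hg].
have e4 : 0 < eps / 4 by rewrite divr_gt0.
have [del del0 hdel] := hg _ e4.
exists (del / 4); first by rewrite divr_gt0.
move=> b gb hba gb_grad; have gb' := gb_grad; case: gb' => [fb_fin _].
set A := fine (f a); set B := fine (f b).
have hB : f b = B%:E by rewrite fineK.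
set u := gb - g.
have [u0|u0] := eqVneq u 0; first by rewrite u0 normr0 ltW.
have nu : 0 < `|u| by rewrite normr_gt0.
set r := del / 2; set c := r / `|u|.
set k := c *: u; set h := k + (b - a).
have nk : `|k| = r by rewrite /k normrZ gtr0_norm ?divr_gt0 // /c divfK // gt_eqF.
have nh : `|h| < del.
  apply: (le_lt_trans (ler_normD _ _)); rewrite nk /r; lra.
have [q [hq hqb]] := hdel _ nh.
have s1 := grad_sub _ _ hip Thn _ _ _ _ gb_grad hq.
have s2 := grad_sub _ _ hip Thn _ _ _ _ ga hB.
have ek : a + h - b = k by rewrite /h addrCA subrKC addrK.
rewrite ek -/B in s1; rewrite -/A -/B in s2.
rewrite -/A /h (ipDr _ hip) in hqb.
have huk : ip gb k - ip g k = r * `|u|.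
  rewrite -(ipBl _ hip) -/u /k (ipZr _ hip) (ipxx _ hip) /c.
  by field; rewrite gt_eqF.
move: hqb; rewrite ler_norml => /andP[_ hq2].
have hh : eps / 4 * `|h| <= eps / 4 * del by rewrite ler_pM2l // ltW.
have : r * `|u| <= eps / 4 * del by lra.
rewrite /r => h3.
have : del * `|u| <= del * (eps / 2) by nra.
by rewrite ler_pM2l // => h4; lra.
Qed.
End Smul.

Theorem lemma3p1 (R : realType)
  (X Y : completeNormedModType R) (ipX : X -> X -> R) (ipY : Y -> Y -> R)
  (F : X -> Y) (DF : set X) (y ydel : Y) (delta : R)
  (Th : X -> \bar R) (p c0 : R) (rho : R) (x0 xi0 xstar : X)
  (L : X -> X -> Y) (Ladj : X -> Y -> X) (eta C0 : R)
  (xi x : R -> X) :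
  is_inner_product ipX -> is_inner_product ipY ->
  `|y - ydel| <= delta ->
  (* (a) *)
  (forall z, Th z != -oo%E) -> (exists z, (Th z < +oo)%E) ->
  weakly_lsc ipX Th ->
  1 < p -> 0 < c0 ->
  (forall xb z xiz, xb \in edom Th -> z \in subdiff_dom ipX Th ->
     subdiff ipX Th z xiz ->
     ((c0 * `|z - xb| `^ p)%:E <= bregman ipX Th xiz xb z)%E) ->
  (* (b) *)
  0 < rho -> subdiff ipX Th x0 xi0 -> cball x0 (2 * rho) `<=` DF ->
  xstar \in edom Th -> DF xstar -> F xstar = y ->
  (bregman ipX Th xi0 xstar x0 <= (c0 * rho `^ p)%:E)%E ->
  (* (c) *)
  {within DF, continuous F} -> weakly_closed ipX ipY F DF ->
  (* (d) *)
  (forall z, z \in cball x0 (2 * rho) `&` edom Th -> linear_op (L z)) ->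
  (forall z, z \in cball x0 (2 * rho) `&` edom Th ->
     forall h w, ipY (L z h) w = ipX h (Ladj z w)) ->
  (forall z, z \in cball x0 (2 * rho) `&` edom Th ->
     forall eps : R, 0 < eps -> exists2 del : R, 0 < del &
       forall z', z' \in cball x0 (2 * rho) `&` edom Th -> `|z' - z| < del ->
         forall h, `|L z' h - L z h| <= eps * `|h|) ->
  0 <= eta < 1 ->
  (forall z zb, z \in cball x0 (2 * rho) `&` edom Th ->
     zb \in cball x0 (2 * rho) `&` edom Th ->
     `|F z - F zb - L zb (z - zb)| <= eta * `|F z - F zb|) ->
  0 < C0 ->
  (forall z, z \in cball x0 (2 * rho) `&` edom Th ->
     forall h, `|L z h| <= C0 * `|h|) ->
  (* (xi, x) solves the initial value problem on [0, +oo) *)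
  xi 0 = xi0 -> x 0 = x0 ->
  (forall t : R, 0 <= t -> x t \in cball x0 (2 * rho) `&` edom Th) ->
  (forall t : R, 0 <= t -> is_gradient ipX (conjugate ipX Th) (xi t) (x t)) ->
  {within `[0, +oo[, continuous xi} ->
  (forall t : R, 0 < t -> is_derive t 1 xi (- Ladj (x t) (F (x t) - ydel))) ->
  (* conclusion *)
  forall T : R, 0 < T ->
    {for T, continuous x} /\
    {for T, continuous (fun t => `|F (x t) - ydel|)}.
Proof.
move=> hipX _ _ Thn _ _ _ _ _ _ _ hball _ _ _ _ Fcont _ _ _ _ _ _ _ _
  _ _ hx hgrad _ hder T T0.
have xic : {for T, continuous xi}.
  apply: differentiable_continuous; apply/derivable1_diffP.
  have := hder T T0 => hd; exact: (@ex_derive _ _ _ _ _ _ _ hd).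
have Tpos : \forall s \near T, 0 < s.
  have : (fun s : R => s) @ T --> T by [].
  move=> /cvgrPdist_lt /(_ T T0); apply: filterS => s.
  rewrite ltr_distl => /andP[h1 h2]; lra.
have xc : {for T, continuous x}.
  apply/cvgrPdist_le => eps eps0.
  have [d d0 hd] := grad_cont _ _ hipX Thn _ _ (hgrad T (ltW T0)) _ eps0.
  have := (cvgrPdist_lt _ _).1 xic d d0.
  move=> hxi; have {}hxi := hxi (nbhs_filter T); near=> s.
  rewrite distrC; apply: hd; last by apply: hgrad; apply: ltW; near: s.
  by rewrite distrC; near: s.
split => //.
have DFx : forall s, 0 < s -> DF (x s).
  move=> s s0; apply: hball; have := hx s (ltW s0).
  by rewrite inE => -[].
have Fxc : (fun s => F (x s)) @ T --> F (x T).
  have hF := (subspace_continuousP _ _).1 Fcont (x T) (DFx T T0).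
  apply: cvg_trans hF => P /= hP.
  have hQ : nbhs (x T) (fun w => DF w -> P (F w)) by exact: hP.
  have hQ' : \forall t \near T, DF (x t) -> P (F (x t)) := xc _ hQ.
  suff : \forall s \near T, P (F (x s)) by [].
  near=> s; apply: (near hQ' s); first by [].
  by apply: DFx; near: s.
apply/cvgrPdist_le => eps eps0.
have h := (cvgrPdist_le _ _).1 Fxc eps eps0.
have {}h := h (nbhs_filter T).
near=> s.
apply: le_trans (ler_dist_dist _ _) _.
rewrite opprB addrA subrK; near: s; exact: h.
Unshelve. all: by end_near.
Qed.
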